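(* Let $T\in\mathbb{N}$, $m\in\mathbb{N}$ and $d=2^m$. Let $\mathcal{A}$ be an action set consisting of $k$ distinct length-$m$ strings of single-qubit Pauli observables. Then for any policy $\pi$ there exists an environment $\rho\in\mathcal{S}_d$ such that $$\mathbb{E}_{\rho,\pi}\big[R_T(\mathcal{A},\rho,\pi)\big]\ge\frac{3}{100}\sqrt{(k-1)T}$$ whenever $T\ge2(k-1)$.
   Context: A length-$m$ string of single-qubit Pauli observables is an operator $P_1\otimes\cdots\otimes P_m$ on $(\mathbb{C}^2)^{\otimes m}$ with each $P_j\in\{\sigma_x,\sigma_y,\sigma_z\}$ (Pauli matrices). $\mathcal{S}_d$ is the set of density matrices on $\mathbb{C}^d$. Discrete multi-armed quantum bandit with finite action set $\mathcal{A}=\{O_1,\dots,O_k\}$ of observables: in each round $t=1,\dots,T$ the learner chooses $A_t\in[k]$ according to a policy $\pi=(\pi_t)$ (distributions on $[k]$ conditioned on past actions and rewards), measures a fresh copy of $\rho$ in the eigenbasis of $O_{A_t}$ and receives the eigenvalue outcome as reward (Born rule). Regret $R_T(\mathcal{A},\rho,\pi)=\sum_{t=1}^T(\max_{O\in\mathcal{A}}\mathrm{Tr}(\rho O)-\mathrm{Tr}(\rho O_{A_t}))$; $\mathbb{E}_{\rho,\pi}$ is expectation over the induced process. *)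

(* Defs.v *)
From HB Require Import structures.
From mathcomp Require Import all_boot all_order all_algebra.
From mathcomp Require Import complex.
From mathcomp Require Import reals.
Set Implicit Arguments. Unset Strict Implicit. Unset Printing Implicit Defensive.
Import Order.TTheory GRing.Theory Num.Theory.
Local Open Scope ring_scope.
Local Open Scope complex_scope.

Inductive pauli := sigma_x | sigma_y | sigma_z.

(* entries of the Pauli matrices, indexed by bits (false = |0>, true = |1>) *)
Definition pauli_entry (R : rcfType) (P : pauli) (b c : bool) : R[i] :=
  match P, b, c with
  | sigma_x, false, true => 1
  | sigma_x, true, false => 1
  | sigma_y, false, true => - 'i
  | sigma_y, true, false => 'i
  | sigma_z, false, false => 1
  | sigma_z, true, true => -1
  | _, _, _ => 0
  end.

(* j-th bit of the computational basis index i of (C^2)^{⊗ m} = C^(2^m) *)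
Definition qbit (i j : nat) : bool := odd (i %/ 2 ^ j).

(* the operator P_1 ⊗ ... ⊗ P_m on C^(2^m): Kronecker-product entries *)
Definition pauli_string (R : rcfType) (m : nat) (P : 'I_m -> pauli)
  : 'M[R[i]]_(2 ^ m) :=
  \matrix_(r, c) \prod_(j < m) pauli_entry R (P j) (qbit r j) (qbit c j).

Definition adjmx (R : rcfType) (n : nat) (A : 'M[R[i]]_n) : 'M[R[i]]_n :=
  (map_mx conjc A)^T.

Definition density (R : rcfType) (d : nat) (rho : 'M[R[i]]_d) : Prop :=
  adjmx rho = rho /\
  (forall v : 'cV[R[i]]_d, 0 <= ((map_mx conjc v)^T *m rho *m v) 0 0) /\
  \tr rho = 1.

Definition expval (R : rcfType) (d : nat) (rho O : 'M[R[i]]_d) : R :=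
  complex.Re (\tr (rho *m O)).

(* reward value of an outcome: true = eigenvalue +1, false = eigenvalue -1 *)
Definition rew (R : rcfType) (b : bool) : R := if b then 1 else -1.

(* Born rule: a Pauli string O has spectrum {+1,-1} with spectral projectors
   (I + O)/2 and (I - O)/2; probability of outcome b is Tr(rho Pi_b). *)
Definition born (R : rcfType) (d : nat) (rho O : 'M[R[i]]_d) (b : bool) : R :=
  complex.Re (\tr (rho *m ((2%:R)^-1 *: (1%:M + (rew R b)%:C *: O)))).

(* policies: distribution on actions given the past history of (action, reward) *)
Definition policy (R : rcfType) (k : nat) := seq ('I_k * bool) -> 'I_k -> R.

Definition is_policy (R : rcfType) (k : nat) (pi : policy R k) : Prop :=
  (forall h a, 0 <= pi h a) /\ (forall h, \sum_(a < k) pi h a = 1).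

Section Bandit.
Variables (R : rcfType) (m k T : nat).
Variable (A : 'I_k -> 'I_m -> pauli).
Variable (rho : 'M[R[i]]_(2 ^ m)).
Variable (pi : policy R k).

Definition mu (a : 'I_k) : R := expval rho (pauli_string R (A a)).

Definition gap (a : 'I_k) : R := \big[Num.max/mu a]_(a' < k) mu a' - mu a.

Definition traj_prob (h : T.-tuple ('I_k * bool)) : R :=
  \prod_(t < T) (pi (take t h) (tnth h t).1 *
                 born rho (pauli_string R (A (tnth h t).1)) (tnth h t).2).

Definition regret (h : T.-tuple ('I_k * bool)) : R :=
  \sum_(t < T) gap (tnth h t).1.

Definition expected_regret : R :=
  \sum_(h : T.-tuple ('I_k * bool)) traj_prob h * regret h.
End Bandit.

(* Main.v *)
Require Import Defs.
From HB Require Import structures.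
From mathcomp Require Import all_boot all_order all_algebra.
From mathcomp Require Import ring lra zify.
From mathcomp Require Import complex reals exp.
Set Implicit Arguments. Unset Strict Implicit. Unset Printing Implicit Defensive.
Import Order.TTheory GRing.Theory Num.Theory.
Local Open Scope ring_scope.
From Stdlib Require FunctionalExtensionality Classical_Pred_Type.
Section Traj.
Variable R : realFieldType.

Lemma sum_tuple_cons (X : finType) n (F : n.+1.-tuple X -> R) :
  \sum_(h : n.+1.-tuple X) F h = \sum_(x : X) \sum_(h : n.-tuple X) F [tuple of x :: h].
Proof.
rewrite (reindex (fun p : X * n.-tuple X => [tuple of p.1 :: p.2])) /=.
  by rewrite pair_big.
exists (fun t : n.+1.-tuple X => (thead t, [tuple of behead t])).
  by move=> [x h] _ /=; congr pair; apply: val_inj.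
by move=> t _; rewrite [t in RHS]tuple_eta.
Qed.

Definition tp (X : finType) n (W : seq X -> X -> R) (h : n.-tuple X) : R :=
  \prod_(t < n) W (take t h) (tnth h t).

Lemma tp_cons (X : finType) n W x (h : n.-tuple X) :
  tp W [tuple of x :: h] = W [::] x * tp (fun s => W (x :: s)) h.
Proof.
rewrite /tp big_ord_recl /= tnth0; congr (_ * _).
by apply: eq_bigr => t _; rewrite tnthS.
Qed.

Lemma tp_ge0 (X : finType) n W (h : n.-tuple X) :
  (forall s x, 0 <= W s x) -> 0 <= tp W h.
Proof. by move=> W0; apply: prodr_ge0 => t _; apply: W0. Qed.

Lemma tp_sum1 (X : finType) n (W : seq X -> X -> R) :
  (forall s, \sum_x W s x = 1) -> \sum_(h : n.-tuple X) tp W h = 1.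
Proof.
elim: n W => [|n IH] W W1.
  rewrite (big_pred1 [tuple]) ?/tp ?big_ord0 // => t.
  by apply/esym/eqP/val_inj; case: t => -[|].
rewrite sum_tuple_cons -(W1 [::]); apply: eq_bigr => x _.
under eq_bigr do rewrite tp_cons.
by rewrite -mulr_sumr IH ?mulr1.
Qed.

Lemma sum_pair (X Y : finType) (F : X * Y -> R) :
  \sum_(x : X * Y) F x = \sum_(c : X) \sum_(b : Y) F (c, b).
Proof. by rewrite pair_bigA; apply: eq_bigr => -[]. Qed.

Variable k : nat.
Definition Wk (pi : seq ('I_k * bool) -> 'I_k -> R) (q : 'I_k -> bool -> R) :=
  fun s (x : 'I_k * bool) => pi s x.1 * q x.1 x.2.

Lemma cond_rew n pi q (phi : 'I_k -> bool -> R) :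
  (forall s, \sum_c pi s c = 1) -> (forall c, \sum_b q c b = 1) ->
  \sum_(h : n.-tuple ('I_k * bool)) tp (Wk pi q) h *
     \sum_(t < n) phi (tnth h t).1 (tnth h t).2 =
  \sum_(h : n.-tuple ('I_k * bool)) tp (Wk pi q) h *
     \sum_(t < n) (\sum_b q (tnth h t).1 b * phi (tnth h t).1 b).
Proof.
move=> pi1 q1; elim: n pi pi1 => [|n IH] pi pi1.
  by apply: eq_bigr => h _; rewrite !big_ord0.
have E : forall g : 'I_k -> bool -> R,
  \sum_(h : n.+1.-tuple ('I_k * bool)) tp (Wk pi q) h *
     \sum_(t < n.+1) g (tnth h t).1 (tnth h t).2 =
  \sum_x Wk pi q [::] x * g x.1 x.2 +
  \sum_x Wk pi q [::] x * \sum_(h : n.-tuple ('I_k * bool))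
      tp (Wk (fun s => pi (x :: s)) q) h * \sum_(t < n) g (tnth h t).1 (tnth h t).2.
  move=> g; rewrite sum_tuple_cons -big_split; apply: eq_bigr => x _ /=.
  have W1 : forall s, \sum_x0 Wk (fun s0 => pi (x :: s0)) q s x0 = 1.
    move=> s; rewrite /Wk -(pi1 (x :: s)) sum_pair /=.
    by apply: eq_bigr => c _; rewrite -mulr_sumr q1 mulr1.
  rewrite -{1}(mulr1 (_ * g _ _)) -(tp_sum1 n W1) mulr_sumr -mulrA mulr_sumr -big_split /=.
  apply: eq_bigr => h _; rewrite tp_cons big_ord_recl tnth0.
  have -> : \sum_(i < n) g (tnth [tuple of x :: h] (lift ord0 i)).1
      (tnth [tuple of x :: h] (lift ord0 i)).2 = \sum_(t < n) g (tnth h t).1 (tnth h t).2.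
    by apply: eq_bigr => t _; rewrite tnthS.
  rewrite /Wk /=; ring.
rewrite E (E (fun c _ => \sum_b q c b * phi c b)) /=; congr (_ + _).
  rewrite !sum_pair /Wk /=; apply: eq_bigr => c _.
  under [RHS]eq_bigr do rewrite -mulrA.
  rewrite -mulr_sumr -mulr_suml q1 mul1r mulr_sumr.
  by apply: eq_bigr => b _; rewrite mulrA.
apply: eq_bigr => x _; congr (_ * _); apply: IH => s; exact: pi1.
Qed.
End Traj.
Section Core.
Variable R : realType.

Lemma ln_le_sub1 (x : R) : 0 < x -> ln x <= x - 1.
Proof.
move=> x0; have := expR_ge1Dx (ln x); rewrite lnK ?posrE //; lra.
Qed.

Lemma amgm2 (x y lam : R) : 0 < lam -> 2 * x * y <= lam * x ^+ 2 + y ^+ 2 / lam.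
Proof.
move=> l0; have : 0 <= lam * (x - y / lam) ^+ 2 by rewrite mulr_ge0 ?sqr_ge0 ?ltW.
have -> : lam * (x - y / lam) ^+ 2 = lam * x ^+ 2 + y ^+ 2 / lam - 2 * x * y.
  by field; rewrite gt_eqF.
lra.
Qed.

Lemma core (H : finType) (P0 L N : H -> R) (Tn D lam : R) :
  (forall h, 0 <= P0 h) -> \sum_h P0 h = 1 -> \sum_h P0 h * L h = 1 ->
  (forall h, 0 < L h) -> 0 <= Tn -> (forall h, 0 <= N h <= Tn) ->
  \sum_h P0 h * (- ln (L h)) <= D -> 0 < lam ->
  \sum_h P0 h * L h * N h <= \sum_h P0 h * N h + Tn * (lam * D + 4 / lam) / 2.
Proof.
move=> P0ge P01 PL1 Lgt Tge Nb KL l0.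
pose s h := Num.sqrt (L h).
have ss : forall h, s h ^+ 2 = L h by move=> h; rewrite sqr_sqrtr // ltW.
have sge : forall h, 0 <= s h by move=> h; exact: sqrtr_ge0.
have sgt : forall h, 0 < s h by move=> h; rewrite sqrtr_gt0.
pose a := \sum_h P0 h * s h.
have E1 : \sum_h P0 h * (s h - 1) ^+ 2 = 2 - 2 * a.
  have -> : 2 - 2 * a = \sum_h P0 h * L h + \sum_h P0 h - 2 * a by rewrite PL1 P01.
  rewrite /a mulr_sumr -!big_split /= -sumrN -big_split /=; apply: eq_bigr => h _.
  rewrite -ss; ring.
have E2 : \sum_h P0 h * (s h + 1) ^+ 2 = 2 + 2 * a.
  have -> : 2 + 2 * a = \sum_h P0 h * L h + \sum_h P0 h + 2 * a by rewrite PL1 P01.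
  rewrite /a mulr_sumr -!big_split /=; apply: eq_bigr => h _.
  rewrite -ss; ring.
have a1 : a <= 1.
  have : 0 <= \sum_h P0 h * (s h - 1) ^+ 2 by apply: sumr_ge0 => h _; rewrite mulr_ge0 ?sqr_ge0.
  rewrite E1; lra.
have aD : 2 - 2 * a <= D.
  apply: le_trans KL.
  have -> : 2 - 2 * a = \sum_h P0 h * (2 * (1 - s h)).
    have -> : \sum_h P0 h * (2 * (1 - s h)) = 2 * \sum_h P0 h - 2 * a.
      rewrite /a !mulr_sumr -sumrB; apply: eq_bigr => h _; ring.
    by rewrite P01 mulr1.
  apply: ler_sum => h _; apply: ler_wpM2l => //.
  have -> : L h = s h * s h by rewrite -expr2 ss.
  rewrite lnM ?posrE //; have := ln_le_sub1 (sgt h); lra.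
have key : forall h, P0 h * L h * N h - P0 h * N h <=
    Tn / 2 * (lam * (P0 h * (s h - 1) ^+ 2) + P0 h * (s h + 1) ^+ 2 / lam).
  move=> h; have [N0 NT] := andP (Nb h).
  have e : P0 h * L h * N h - P0 h * N h = P0 h * (N h * ((s h - 1) * (s h + 1))).
    rewrite -ss; ring.
  rewrite e.
  have e2 : Tn / 2 * (lam * (P0 h * (s h - 1) ^+ 2) + P0 h * (s h + 1) ^+ 2 / lam)
     = P0 h * (Tn * ((lam * `|s h - 1| ^+ 2 + (s h + 1) ^+ 2 / lam) / 2)).
    by rewrite real_normK ?num_real //; field; rewrite gt_eqF.
  rewrite e2; apply: ler_wpM2l => //.
  have h1 : N h * ((s h - 1) * (s h + 1)) <= N h * (`|s h - 1| * (s h + 1)).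
    apply: ler_wpM2l => //; apply: ler_wpM2r; first by have := sge h; lra.
    exact: ler_norm.
  apply: (le_trans h1).
  have h2 : 0 <= `|s h - 1| * (s h + 1) by rewrite mulr_ge0 //; have := sge h; lra.
  apply: (le_trans (ler_wpM2r h2 NT)); apply: ler_wpM2l => //.
  have := amgm2 `|s h - 1| (s h + 1) l0; lra.
have S : \sum_h (P0 h * L h * N h - P0 h * N h) <=
   Tn / 2 * (lam * (2 - 2 * a) + (2 + 2 * a) / lam).
  rewrite -E1 -E2 mulr_sumr mulr_suml -big_split mulr_sumr /=.
  exact: ler_sum => h _; exact: key h.
rewrite big_split /= sumrN in S.
have : Tn / 2 * (lam * (2 - 2 * a) + (2 + 2 * a) / lam) <= Tn * (lam * D + 4 / lam) / 2.
  have -> : Tn * (lam * D + 4 / lam) / 2 = Tn / 2 * (lam * D + 4 / lam) by ring.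
  apply: ler_wpM2l; first by lra.
  apply: lerD; first by apply: ler_wpM2l => //; exact: ltW.
  apply: ler_wpM2r; first by rewrite invr_ge0 ltW.
  lra.
lra.
Qed.
End Core.
Section Pauli.
Local Open Scope complex_scope.
Variable R : rcfType.
Local Notation pe := (pauli_entry R).

Lemma pe_sq P x y : pe P x false * pe P false y + pe P x true * pe P true y = (x == y)%:R.
Proof.
case: P; case: x; case: y => /=; rewrite ?(mul0r, mulr0, add0r, addr0, mul1r, mulr1) //;
 rewrite ?mulrN ?mulNr ?opprK -?expr2 ?sqr_i ?sqrrN ?expr1n ?mulN1r ?opprK //.
Qed.

Lemma pe_tr P : pe P false false + pe P true true = 0.
Proof. by case: P => /=; rewrite ?addr0 ?subrr. Qed.

Lemma pe_conj P x y : (pe P x y)^* = pe P y x.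
Proof.
by case: P; case: x; case: y => //=; apply/eqP; rewrite eq_complex /= ?oppr0 ?opprK ?eqxx.
Qed.
Lemma pe_tr2 P Q : P <> Q ->
  \sum_(x : bool) \sum_(b : bool) pe P x b * pe Q b x = 0.
Proof.
rewrite !big_bool /=.
case: P; case: Q => //= _; rewrite ?(mul0r, mulr0, add0r, addr0, mul1r, mulr1) //;
 rewrite ?mulrN ?mulNr ?opprK ?subrr ?addrN ?mulN1r ?mulrN1 ?opprK ?addNr //.
Qed.

Lemma qbit0 r : qbit r 0 = odd r.
Proof. by rewrite /qbit expn0 divn1. Qed.

Lemma qbitS r j : qbit r j.+1 = qbit r./2 j.
Proof. by rewrite /qbit expnS divnMA divn2. Qed.

Lemma sum_even_odd (Q : nmodType) n (G : nat -> Q) :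
  \sum_(0 <= r < (2 * n)%N) G r = \sum_(0 <= r < n) (G (2 * r)%N + G (2 * r).+1).
Proof.
elim: n => [|n IH]; first by rewrite !big_geq.
by rewrite mulnS add2n !big_nat_recr //= IH -addrA.
Qed.

Lemma sum_qbit (Q : comNzRingType) m (F : 'I_m -> bool -> Q) :
  \sum_(r < 2 ^ m) \prod_(j < m) F j (qbit r j) = \prod_(j < m) \sum_(b : bool) F j b.
Proof.
elim: m F => [|m IH] F.
  by rewrite expn0 big_ord1 !big_ord0.
rewrite -(big_mkord xpredT (fun r => \prod_(j < m.+1) F j (qbit r j))) expnS.
have E : forall r, \prod_(j < m.+1) F j (qbit r j) =
    F ord0 (odd r) * \prod_(j < m) F (lift ord0 j) (qbit r./2 j).
  move=> r; rewrite big_ord_recl qbit0; congr (_ * _).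
  by apply: eq_bigr => j _; rewrite lift0 qbitS.
rewrite sum_even_odd big_mkord.
under eq_bigr do rewrite !E mul2n /= odd_double uphalf_double doubleK.
rewrite big_split /= -!mulr_sumr (IH (fun j => F (lift ord0 j))) big_ord_recl big_bool /=.
by rewrite mulrDl addrC.
Qed.

Lemma qbit_eq (Q : comNzRingType) m r c : (r < 2 ^ m)%N -> (c < 2 ^ m)%N ->
  \prod_(j < m) ((qbit r j == qbit c j)%:R : Q) = (r == c)%:R.
Proof.
elim: m r c => [|m IH] r c.
  by rewrite expn0 big_ord0 !ltnS !leqn0 => /eqP -> /eqP ->.
rewrite expnS mul2n -!ltn_half_double => hr hc.
rewrite big_ord_recl !qbit0.
under eq_bigr do rewrite lift0 !qbitS.
rewrite IH // -natrM mulnb; congr (_ %:R); congr nat_of_bool.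
apply/idP/eqP => [/andP[/eqP o /eqP h]|->]; last by rewrite !eqxx.
by rewrite -(odd_double_half r) -(odd_double_half c) o h.
Qed.

Variable m : nat.
Local Notation O P := (pauli_string R (P : 'I_m -> pauli)).

Lemma mulO (P Q : 'I_m -> pauli) r c :
  (O P *m O Q) r c =
  \prod_(j < m) \sum_(b : bool) pe (P j) (qbit r j) b * pe (Q j) b (qbit c j).
Proof.
rewrite mxE -(sum_qbit (fun j b => pe (P j) (qbit r j) b * pe (Q j) b (qbit c j))).
by apply: eq_bigr => s _; rewrite !mxE -big_split.
Qed.

Lemma OO (P : 'I_m -> pauli) : O P *m O P = 1%:M.
Proof.
apply/matrixP => r c; rewrite mulO mxE.
under eq_bigr do rewrite big_bool /= addrC pe_sq.
by rewrite qbit_eq.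
Qed.

Lemma trOO (P Q : 'I_m -> pauli) :
  \tr (O P *m O Q) = \prod_(j < m) \sum_(x : bool) \sum_(b : bool) pe (P j) x b * pe (Q j) b x.
Proof.
rewrite /mxtrace -(sum_qbit (fun j x => \sum_(b : bool) pe (P j) x b * pe (Q j) b x)).
by apply: eq_bigr => r _; rewrite mulO.
Qed.

Lemma trOO_same (P : 'I_m -> pauli) : \tr (O P *m O P) = (2 ^ m)%:R.
Proof. by rewrite OO mxtrace1. Qed.

Lemma trOO_diff (P Q : 'I_m -> pauli) (j : 'I_m) : P j <> Q j -> \tr (O P *m O Q) = 0.
Proof. by move=> hj; rewrite trOO (bigD1 j) //= pe_tr2 // mul0r. Qed.

Lemma trO (P : 'I_m -> pauli) : (0 < m)%N -> \tr (O P) = 0.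
Proof.
case: m P => // m' P _.
rewrite /mxtrace (eq_bigr (fun r : 'I_(2 ^ m'.+1) => \prod_(j < m'.+1) pe (P j) (qbit r j) (qbit r j))); last by move=> r _; rewrite mxE.
by rewrite (sum_qbit (fun j x => pe (P j) x x)) big_ord_recl big_bool /= addrC pe_tr mul0r.
Qed.

Lemma adjO (P : 'I_m -> pauli) : adjmx (O P) = O P.
Proof.
apply/matrixP => r c; rewrite !mxE rmorph_prod; apply: eq_bigr => j _.
exact: pe_conj.
Qed.

Definition dd : R[i] := (2 ^ m)%:R.
Lemma dd_neq0 : dd != 0. Proof. by rewrite /dd pnatr_eq0 expn_eq0. Qed.

Definition rhoD (D : R) (P : 'I_m -> pauli) : 'M[R[i]]_(2 ^ m) :=
  dd^-1 *: (1%:M + D%:C *: O P).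

Lemma tr_rhoO D (P Q : 'I_m -> pauli) :
  \tr (rhoD D P *m O Q) = dd^-1 * (\tr (O Q) + D%:C * \tr (O P *m O Q)).
Proof.
by rewrite /rhoD -scalemxAl mulmxDl mul1mx -scalemxAl mxtraceZ mxtraceD mxtraceZ.
Qed.

Lemma tr_rho D (P : 'I_m -> pauli) : (0 < m)%N || (D == 0) -> \tr (rhoD D P) = 1.
Proof.
move=> h; rewrite /rhoD mxtraceZ mxtraceD mxtraceZ mxtrace1.
case/orP: h => [m0|/eqP->]; [rewrite trO // mulr0 | rewrite mul0r].
  by rewrite addr0 mulVf // dd_neq0.
by rewrite addr0 mulVf // dd_neq0.
Qed.

Lemma Re_realM (a : R) (z : R[i]) : complex.Re (a%:C * z) = a * complex.Re z.
Proof. by case: z => x y /=; rewrite mul0r subr0. Qed.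

Lemma Re_add (x y : R[i]) : complex.Re (x + y) = complex.Re x + complex.Re y.
Proof. by case: x; case: y. Qed.

Lemma born_gen (rho : 'M[R[i]]_(2 ^ m)) (P : 'I_m -> pauli) b :
  \tr rho = 1 ->
  born rho (O P) b = 2^-1 * (1 + rew R b * expval rho (O P)).
Proof.
move=> tr1; rewrite /born /expval -scalemxAr mxtraceZ mulmxDr mulmx1 -scalemxAr.
rewrite mxtraceD mxtraceZ tr1.
have -> : (2%:R : R[i])^-1 = (2^-1 : R)%:C by rewrite rmorphV ?unitfE ?pnatr_eq0 // rmorph_nat.
by rewrite Re_realM Re_add Re_realM.
Qed.

Lemma expval_same D (P : 'I_m -> pauli) : (0 < m)%N -> expval (rhoD D P) (O P) = D.
Proof.
move=> m0; rewrite /expval tr_rhoO trOO_same trO // add0r -/dd mulrC -mulrA.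
by rewrite mulfV ?dd_neq0 // mulr1.
Qed.

Lemma expval_diff D (P Q : 'I_m -> pauli) j : (0 < m)%N -> P j <> Q j ->
  expval (rhoD D P) (O Q) = 0.
Proof.
by move=> m0 hj; rewrite /expval tr_rhoO (trOO_diff hj) trO // mulr0 addr0 mulr0.
Qed.

Lemma adjmxD n (A B : 'M[R[i]]_n) : adjmx (A + B) = adjmx A + adjmx B.
Proof. by rewrite /adjmx map_mxD linearD. Qed.

Lemma adjmxZ n a (A : 'M[R[i]]_n) : adjmx (a *: A) = a^* *: adjmx A.
Proof. by rewrite /adjmx map_mxZ linearZ. Qed.

Lemma adjmx1 n : adjmx (1%:M : 'M[R[i]]_n) = 1%:M.
Proof. by rewrite /adjmx map_mx1 trmx1. Qed.

Lemma quad_ge0 n (w : 'cV[R[i]]_n) : 0 <= ((map_mx conjc w)^T *m w) 0 0.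
Proof.
rewrite mxE; apply: sumr_ge0 => i _; rewrite !mxE mulrC; exact: mulcJ_ge0.
Qed.

Lemma density_rho D (P : 'I_m -> pauli) : (0 < m)%N || (D == 0) -> 0 <= D <= 1 ->
  density (rhoD D P).
Proof.
move=> m0 /andP[D0 D1]; split; [|split]; last exact: tr_rho.
  rewrite /rhoD adjmxZ adjmxD adjmx1 adjmxZ adjO; congr (_ *: (_ + _ *: _)); last exact: conjc_real.
  have := conjc_inv dd. rewrite /dd conjc_nat. exact.
move=> v.
pose B : 'M[R[i]]_(2 ^ m) := 1%:M + O P.
have BB : B *m B = 2%:R *: B.
  rewrite /B mulmxDl !mulmxDr !mul1mx mulmx1 OO scalerDl scale1r; rewrite addrA.
  by rewrite -addrA [pauli_string R P + 1%:M]addrC.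
have adjB : (map_mx conjc B)^T = B by rewrite -/(adjmx B) /B adjmxD adjmx1 adjO.
have E : rhoD D P = dd^-1 *: ((1 - D)%:C *: 1%:M + (D / 2)%:C *: (B *m B)).
  rewrite BB scalerA /rhoD /B; congr (_ *: _).
  have -> : (D / 2)%:C * 2 = D%:C.
    have h2 : (2 : R[i]) = (2 : R)%:C by rewrite rmorph_nat.
    by rewrite h2 -rmorphM mulfVK // pnatr_eq0.
  by rewrite scalerDr addrA -scalerDl -rmorphD subrK scale1r.
rewrite E -scalemxAr -scalemxAl mxE; apply: mulr_ge0.
  by rewrite invr_ge0 /dd ler0n.
rewrite mulmxDr mulmxDl -!scalemxAr -!scalemxAl mxE [X in _ + X]mxE [X in X + _]mxE mulmx1.
apply: addr_ge0; apply: mulr_ge0.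
- by rewrite ler0c subr_ge0.
- exact: quad_ge0.
- by rewrite ler0c divr_ge0.
have -> : (map_mx conjc v)^T *m (B *m B) *m v = ((map_mx conjc v)^T *m B) *m (B *m v) by rewrite !mulmxA.
have -> : (map_mx conjc v)^T *m B = (map_mx conjc (B *m v))^T.
  by rewrite map_mxM trmx_mul adjB.
exact: quad_ge0.
Qed.

End Pauli.
Lemma Wk_sum1 (R : realFieldType) k (pi : seq ('I_k * bool) -> 'I_k -> R) q s :
  (forall s, \sum_c pi s c = 1) -> (forall c, \sum_b q c b = 1) ->
  \sum_x Wk pi q s x = 1.
Proof.
move=> pi1 q1; rewrite -(pi1 s) sum_pair /Wk /=.
by apply: eq_bigr => c _; rewrite -mulr_sumr q1 mulr1.
Qed.

Lemma ln_prod (R : realType) n (f : 'I_n -> R) : (forall t, 0 < f t) ->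
  ln (\prod_(t < n) f t) = \sum_(t < n) ln (f t).
Proof.
move=> fgt.
suff [] : 0 < \prod_(t < n) f t /\ ln (\prod_(t < n) f t) = \sum_(t < n) ln (f t) by [].
apply: (big_ind2 (fun x y => 0 < x /\ ln x = y)).
- by rewrite ln1.
- move=> x1 x2 y1 y2 [x10 <-] [x20 <-]; split; first exact: mulr_gt0.
  by rewrite lnM ?posrE.
- by move=> t _; split.
Qed.

Lemma bigmax_ge (R : realDomainType) (I : eqType) (F : I -> R) x (r : seq I) j :
  j \in r -> F j <= \big[Num.max/x]_(i <- r) F i.
Proof.
elim: r => // i r IH; rewrite in_cons big_cons le_max => /orP[/eqP->|/IH->];
  by rewrite ?lexx ?orbT.
Qed.

Lemma final_arith (R : realFieldType) (Tn kk na Y Dl S sq : R) :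
  0 < Tn -> 2 <= kk -> 0 <= Dl -> 0 <= S -> na <= Tn / kk ->
  Y <= na + Tn * (20 * (1 / 96) + 4 / 20) / 2 -> Dl * Tn = S / 8 -> sq <= S ->
  3 / 100 * sq <= Dl * (Tn - Y).
Proof.
move=> T0 k2 D0 S0 hna hY hDT hsq.
have h1 : Tn / kk <= Tn / 2.
  rewrite ler_pdivrMr; last lra.
  rewrite mulrAC ler_pdivlMr; last lra.
  by apply: ler_wpM2l; [lra|].
have h2 : Tn * (71 / 240) <= Tn - Y by lra.
have h3 : Dl * (Tn * (71 / 240)) <= Dl * (Tn - Y) by apply: ler_wpM2l.
rewrite mulrA hDT in h3; lra.
Qed.

Theorem mainTheorem6 (R : realType) (T m k : nat)
  (A : 'I_k -> 'I_m -> pauli) (A_distinct : injective A)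
  (pi : policy R k) (pi_ok : is_policy pi) :
  (2 * (k - 1) <= T)%N ->
  exists rho : 'M[R[i]]_(2 ^ m),
    density rho /\
    @expected_regret R m k T A rho pi >= (3%:R / 100%:R) * Num.sqrt ((k - 1)%N%:R * T%:R).
Proof.
move=> hT.
have [k1|k2] := leqP k 1.
  exists (rhoD 0 (fun _ : 'I_m => sigma_x)); split.
    by apply: density_rho; rewrite ?eqxx ?orbT ?lexx ?ler01.
  have -> : (k - 1)%N = 0%N by apply/eqP; rewrite subn_eq0.
  rewrite mul0r sqrtr0 mulr0 /expected_regret; apply: sumr_ge0 => h _.
  rewrite /regret big1 ?mulr0 // => t _.
  move: (tnth h t).1 => a; rewrite /gap.
  apply/eqP; rewrite subr_eq0; apply/eqP.
  elim/big_rec: _ => // i x _ ->.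
  have -> : i = a by apply: ord_inj; have := ltn_ord i; have := ltn_ord a; lia.
  by rewrite maxxx.
have m0 : (0 < m)%N.
  rewrite lt0n; apply/negP => /eqP m0.
  have : A (Ordinal (ltnW k2)) = A (Ordinal k2).
    apply: FunctionalExtensionality.functional_extensionality => j.
    by exfalso; have := ltn_ord j; rewrite {2}m0.
  by move/A_distinct/(congr1 val).
have [pi0 pi1] := pi_ok.
pose Tn : R := T%:R. pose kk : R := k%:R.
have kT : (k <= T)%N by lia.
have Tpos : 0 < Tn by rewrite /Tn ltr0n; lia.
have kTr : kk <= Tn by rewrite /kk /Tn ler_nat.
have k2r : 2 <= kk by rewrite /kk (ler_nat R 2 k).
pose S := Num.sqrt (kk * Tn).
have S0 : 0 <= S by apply: sqrtr_ge0.
have S2 : S ^+ 2 = kk * Tn by rewrite sqr_sqrtr // mulr_ge0 // ?ltW //; lra.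
pose Dl := S / (8 * Tn).
have Dl0 : 0 <= Dl by rewrite divr_ge0 //; lra.
have Dl2 : Dl ^+ 2 = kk / (64 * Tn).
  by rewrite /Dl expr_div_n S2; field; rewrite gt_eqF.
have Dl2b : Dl ^+ 2 <= 1 / 64.
  rewrite Dl2 ler_pdivrMr; last lra.
  lra.
have Dl1 : Dl <= 1 / 8 by nra.
pose q0 : 'I_k -> bool -> R := fun _ _ => 2^-1.
have q01 : forall c, \sum_b q0 c b = 1 by move=> c; rewrite big_bool /q0 /=; lra.
pose P0 (h : T.-tuple ('I_k * bool)) := tp (Wk pi q0) h.
have P0ge : forall h, 0 <= P0 h.
  by move=> h; apply: tp_ge0 => s x; rewrite /Wk mulr_ge0 // /q0 invr_ge0 ler0n.
have P0sum : \sum_h P0 h = 1 by apply: tp_sum1 => s; apply: Wk_sum1.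
pose N a (h : T.-tuple ('I_k * bool)) : R := \sum_(t < T) ((tnth h t).1 == a)%:R.
have Nb : forall a h, 0 <= N a h <= Tn.
  move=> a h; apply/andP; split; first by apply: sumr_ge0 => t _; rewrite ler0n.
  rewrite /Tn -[T in T%:R]card_ord -sumr_const; apply: ler_sum => t _.
  by rewrite lern1 leq_b1.
pose na a := \sum_h P0 h * N a h.
have sumna : \sum_a na a = Tn.
  rewrite /na exchange_big /= -[RHS]mulr1 -P0sum mulr_sumr; apply: eq_bigr => h _.
  rewrite -mulr_sumr mulrC; congr (_ * _).
  rewrite /N exchange_big /= /Tn -[T in T%:R]card_ord -sumr_const; apply: eq_bigr => t _.
  rewrite (bigD1 (tnth h t).1) //= eqxx big1 ?addr0 // => c hc.
  by rewrite eq_sym (negbTE hc).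
have [a ha] : exists a, na a <= Tn / kk.
  case: (boolP [exists c, na c <= Tn / kk]) => [/existsP //|/existsPn H].
  exfalso.
  have : \sum_(c < k) Tn / kk < \sum_c na c.
    apply: ltr_sum => [|c _]; last by rewrite ltNge H.
    by apply/hasP; exists (Ordinal k2); rewrite ?mem_index_enum.
  rewrite sumna sumr_const card_ord -mulr_natr mulfVK; first by rewrite ltxx.
  by rewrite /kk pnatr_eq0; lia.
pose qa : 'I_k -> bool -> R := fun c b => 2^-1 * (1 + rew R b * (Dl * (c == a)%:R)).
pose rho := rhoD Dl (A a).
have hexp : forall c, expval rho (pauli_string R (A c)) = Dl * (c == a)%:R.
  move=> c; case: (eqVneq c a) => [->|hca]; first by rewrite mulr1 expval_same.
  have [j hj] : exists j, A a j <> A c j.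
    apply: Classical_Pred_Type.not_all_ex_not => H.
    move/eqP: hca; apply; apply: A_distinct.
    by apply: FunctionalExtensionality.functional_extensionality => j; rewrite H.
  by rewrite (expval_diff _ m0 hj) mulr0.
have hborn : forall c b, born rho (pauli_string R (A c)) b = qa c b.
  by move=> c b; rewrite born_gen ?hexp // tr_rho // m0.
exists rho; split.
  by apply: density_rho; rewrite ?m0 // Dl0 /=; lra.
have hgap : forall c, gap A rho c = Dl - Dl * (c == a)%:R.
  have hmu : forall c, mu A rho c = Dl * (c == a)%:R by move=> c; exact: hexp.
  move=> c; rewrite /gap /mu hexp; congr (_ - _).
  apply/eqP; rewrite eq_le; apply/andP; split.
    elim/big_rec: _ => [|i y _ hy] /=; last by rewrite ge_max hy andbT hexp ler_piMr // lern1 leq_b1.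
    by rewrite ler_piMr // lern1 leq_b1.
  by have := @bigmax_ge _ _ (fun c => expval rho (pauli_string R (A c))) (Dl * (c == a)%:R) (index_enum 'I_k) a (mem_index_enum a); rewrite hexp eqxx mulr1.
have qa1 : forall c, \sum_b qa c b = 1.
  by move=> c; rewrite big_bool /qa /=; lra.
pose Pa (h : T.-tuple ('I_k * bool)) := tp (Wk pi qa) h.
have Pasum : \sum_h Pa h = 1 by apply: tp_sum1 => s; apply: Wk_sum1.
have ER : expected_regret T A rho pi = Dl * (Tn - \sum_h Pa h * N a h).
  rewrite /expected_regret /regret /traj_prob.
  have -> : Dl * (Tn - \sum_h Pa h * N a h) =
      \sum_h Pa h * (Dl * Tn - Dl * N a h).
    have -> : \sum_h Pa h * (Dl * Tn - Dl * N a h) =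
        Dl * Tn * \sum_h Pa h - Dl * \sum_h Pa h * N a h.
      by rewrite !mulr_sumr -sumrB; apply: eq_bigr => h _; ring.
    by rewrite Pasum mulr1 mulrBr.
  apply: eq_bigr => h _; congr (_ * _).
    by apply: eq_bigr => t _; rewrite hborn.
  under eq_bigr do rewrite hgap.
  rewrite sumrB sumr_const card_ord /N mulr_sumr /Tn mulr_natr.
  by congr (_ - _); apply: eq_bigr => t _.
pose L (h : T.-tuple ('I_k * bool)) :=
  \prod_(t < T) (1 + rew R (tnth h t).2 * (Dl * ((tnth h t).1 == a)%:R)).
have PaL : forall h, Pa h = P0 h * L h.
  move=> h; rewrite /Pa /P0 /L /tp -big_split; apply: eq_bigr => t _.
  by rewrite /Wk /qa /q0 /=; rewrite mulrA.
have Lgt : forall h, 0 < L h.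
  move=> h; apply: prodr_gt0 => t _.
  by case: (tnth h t).2; case: (_ == a) => /=; lra.
have PL1 : \sum_h P0 h * L h = 1 by rewrite -Pasum; apply: eq_bigr => h _; rewrite PaL.
pose kap := 2^-1 * (ln (1 + Dl) + ln (1 - Dl)).
have kapE : kap = 2^-1 * ln (1 - Dl ^+ 2).
  by rewrite /kap -lnM ?posrE; [congr (_ * ln _); ring | lra | lra].
have kap0 : 0 <= - kap.
  by rewrite kapE oppr_ge0 mulr_ge0_le0 ?invr_ge0 ?ler0n // ln_le0 //; nra.
have kapb : - kap <= 2 / 3 * Dl ^+ 2.
  have h1 : 0 < 1 - Dl ^+ 2 by nra.
  have h2 : (1 - Dl ^+ 2)^-1 <= 1 + 4 / 3 * Dl ^+ 2.
    rewrite -div1r ler_pdivrMr //; nra.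
  have h1p : 0 < (1 - Dl ^+ 2)^-1 by rewrite invr_gt0.
  have h3 := ln_le_sub1 h1p.
  rewrite lnV ?posrE // in h3.
  rewrite kapE; lra.
have KLe : \sum_h P0 h * (- ln (L h)) = - kap * na a.
  have e1 : \sum_h P0 h * (- ln (L h)) = - \sum_h P0 h *
      \sum_(t < T) (fun c b => ln (1 + rew R b * (Dl * (c == a)%:R))) (tnth h t).1 (tnth h t).2.
    rewrite -sumrN; apply: eq_bigr => h _; rewrite /L ln_prod; last first.
      by move=> t; case: (tnth h t).2; case: (_ == a) => /=; lra.
    by rewrite mulrN.
  rewrite e1 /P0 (@cond_rew R k T pi q0 (fun c b => ln (1 + rew R b * (Dl * (c == a)%:R)))) //.
  rewrite /na mulNr mulr_sumr; congr (- _); apply: eq_bigr => h _.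
  rewrite mulrCA; congr (_ * _); rewrite /N mulr_sumr; apply: eq_bigr => t _.
  rewrite big_bool /q0 /=; case: (_ == a) => /=.
    by rewrite /kap !mul1r !mulr1 mulN1r mulrDr.
  by rewrite !mulr0 !addr0 ln1 !mulr0 addr0.
have KL : \sum_h P0 h * (- ln (L h)) <= 1 / 96.
  rewrite KLe.
  have hn0 : 0 <= na a by apply: sumr_ge0 => h _; rewrite mulr_ge0 //; case/andP: (Nb a h).
  apply: (le_trans (ler_wpM2l kap0 ha)).
  apply: (le_trans (ler_wpM2r _ kapb)); first by rewrite divr_ge0 // ?ltW // ler0n.
  rewrite Dl2 le_eqVlt; apply/orP; left; apply/eqP.
  by field; rewrite /kk /Tn !pnatr_eq0; apply/andP; split; lia.
have l0 : (0 : R) < 20 by [].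
have C := core P0ge P0sum PL1 Lgt (ltW Tpos) (Nb a) KL l0.
have PaN : \sum_h Pa h * N a h = \sum_h P0 h * L h * N a h.
  by apply: eq_bigr => h _; rewrite PaL.
rewrite ER PaN.
have hDT : Dl * Tn = S / 8 by rewrite /Dl; field; rewrite gt_eqF.
have hsq : Num.sqrt ((k - 1)%N%:R * T%:R) <= S.
  apply: ler_wsqrtr; rewrite -/Tn ler_wpM2r ?ltW // /kk.
  by rewrite ?ltr_nat ?ler_nat subn1 ?ltn_predL ?leq_pred ?(ltnW k2).
exact: final_arith Tpos k2r Dl0 S0 ha C hDT hsq.
Qed.
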